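(* Let $F$ be a field of characteristic $0$, let $A$ be the free associative $F$-algebra without unity on free generators $x,y$, let $I$ be the two-sided ideal of $A$ generated by the following elements: (i) all monomials of degree $8$; (ii) all monomials of degree greater than $2$ in $x$; (iii) all monic monomials of degree $7$ except $yxy^3xy$ and $y^2xyxy^2$; (iv) all monic monomials of degree less than $7$ which do not divide either of the monomials $yxy^3xy$ and $y^2xyxy^2$; (v) the polynomial $2xy^3xy-5yxyxy^2-2yxy^3x+5y^2xyxy$; (vi) the polynomial $2yxy^3xy-5y^2xyxy^2$; let $B=A/I$ and let $L=[B]$. Then $L$ is a $5$-Engel Lie algebra such that the group $L^*$ is not $5$-Engel.
   Context: For monic monomials $m,n$ in $x,y$, $m$ divides $n$ if $n=m_1 m m_2$ for some monic monomials $m_1,m_2$ (possibly equal to $1$). $[B]$ is the Lie algebra on $B$ with bracket $[a,b]=ab-ba$; it is nilpotent since $B^8=0$. For a nilpotent Lie algebra $L$ over a field of characteristic $0$, $L^*$ denotes the group with underlying set $L$ and multiplication given by the Baker–Campbell–Hausdorff formula $u*v=\log(e^ue^v)=u+v+\tfrac12[u,v]+\cdots$. Set $[x,{}_{(1)}y]=[x,y]$, $[x,{}_{(k+1)}y]=[[x,{}_{(k)}y],y]$; a Lie algebra is $n$-Engel if $[u,{}_{(n)}v]=0$ for all $u,v$. For a group, $(x,y)=x^{-1}y^{-1}xy$, $(x,{}_{(k+1)}y)=((x,{}_{(k)}y),y)$; a group is $n$-Engel if $(u,{}_{(n)}v)=1$ for all $u,v$. *)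

(* Defs.v *)
From mathcomp Require Import all_boot all_order all_algebra.
Set Implicit Arguments. Unset Strict Implicit. Unset Printing Implicit Defensive.
Import Order.TTheory GRing.Theory Num.Theory.
Local Open Scope ring_scope.

(* Words over the alphabet {x, y}: x is [false], y is [true].
   A (monic) monomial of the free algebra is a word; the empty word is 1. *)
Definition lx : bool := false.
Definition ly : bool := true.
Definition word := seq bool.

Section FreeAlg.
Variable F : fieldType.

(* Noncommutative series over F in x, y: coefficient functions on words. *)
Definition ncpoly := word -> F.

(* The free associative algebra without unity A: finitely supported
   coefficient functions with zero constant term. *)
Definition in_A (p : ncpoly) : Prop :=
  p [::] = 0 /\ exists s : seq word, forall w, w \notin s -> p w = 0.

Definition pzero : ncpoly := fun _ => 0.
Definition padd (p q : ncpoly) : ncpoly := fun w => p w + q w.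
Definition popp (p : ncpoly) : ncpoly := fun w => - p w.
Definition psub (p q : ncpoly) : ncpoly := padd p (popp q).
Definition pscale (c : F) (p : ncpoly) : ncpoly := fun w => c * p w.
Definition pmul (p q : ncpoly) : ncpoly :=
  fun w => \sum_(i < (size w).+1) p (take i w) * q (drop i w).
Definition mono (w : word) : ncpoly := fun u => if u == w then 1 else 0.

(* positive powers u^k, k >= 1 (ppow u 0 = u is never used below) *)
Fixpoint ppow (u : ncpoly) (k : nat) : ncpoly :=
  match k with 0 | 1 => u | k'.+1 => pmul (ppow u k') u end.

Definition is_ideal (J : ncpoly -> Prop) : Prop :=
  [/\ J pzero,
      (forall p q, J p -> J q -> J (padd p q)),
      (forall c p, J p -> J (pscale c p)),
      (forall a p, in_A a -> J p -> J (pmul a p)) &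
      (forall a p, in_A a -> J p -> J (pmul p a))].

Definition gen_ideal (S : ncpoly -> Prop) (p : ncpoly) : Prop :=
  forall J, is_ideal J -> (forall s, S s -> J s) -> J p.

Definition m1 : word := [:: ly; lx; ly; ly; ly; lx; ly].
Definition m2 : word := [:: ly; ly; lx; ly; lx; ly; ly].

Definition rel5 : ncpoly :=
  padd (padd (pscale 2 (mono [:: lx; ly; ly; ly; lx; ly]))
             (pscale (-5) (mono [:: ly; lx; ly; lx; ly; ly])))
       (padd (pscale (-2) (mono [:: ly; lx; ly; ly; ly; lx]))
             (pscale 5 (mono [:: ly; ly; lx; ly; lx; ly]))).
Definition rel6 : ncpoly := padd (pscale 2 (mono m1)) (pscale (-5) (mono m2)).

Definition gensI (p : ncpoly) : Prop :=
  (exists w : word, p = mono w /\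
     [\/ size w = 8%N,
         (2 < count (pred1 lx) w)%N,
         [/\ size w = 7%N, w != m1 & w != m2]
       | [/\ (0 < size w < 7)%N, ~~ infix w m1 & ~~ infix w m2]])
  \/ p = rel5
  \/ p = rel6.

Definition inI (p : ncpoly) : Prop := gen_ideal gensI p.

(* Lie bracket of [B] (on representatives in A) and Engel iterates *)
Definition lbr (p q : ncpoly) : ncpoly := psub (pmul p q) (pmul q p).
Definition lie_engel (n : nat) (u v : ncpoly) : ncpoly :=
  iter n (fun z => lbr z v) u.

(* Baker-Campbell-Hausdorff product u*v = log(e^u e^v) computed in B.
   Since B^8 = 0, the series exp and log are exactly their truncations at
   degree 7: e^u - 1 = sum_{k=1}^7 u^k/k!, log(1+w) = sum_{k=1}^7 (-1)^(k+1) w^k/k. *)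
Definition pexpm1 (u : ncpoly) : ncpoly :=
  \big[padd/pzero]_(1 <= k < 8) pscale (k`!%:R)^-1 (ppow u k).
Definition plog1p (w : ncpoly) : ncpoly :=
  \big[padd/pzero]_(1 <= k < 8) pscale ((-1) ^+ k.+1 / k%:R) (ppow w k).
Definition bch (u v : ncpoly) : ncpoly :=
  let a := pexpm1 u in let b := pexpm1 v in
  plog1p (padd (padd a b) (pmul a b)).

(* group commutator (u,v) = u^{-1} v^{-1} u v in L^*; the inverse of u is -u *)
Definition gcomm (u v : ncpoly) : ncpoly :=
  bch (bch (bch (popp u) (popp v)) u) v.
Definition grp_engel (n : nat) (u v : ncpoly) : ncpoly :=
  iter n (fun z => gcomm z v) u.

End FreeAlg.

(* Main.v *)
From Stdlib Require Import ZArith QArith FunctionalExtensionality.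
Require Import Defs.
From mathcomp Require Import all_boot all_order all_algebra.
From mathcomp Require Import ring.
From mathcomp Require ssrZ.
Import GRing.Theory ssrZ.Instances.
Local Close Scope Q_scope.
Set Implicit Arguments. Unset Strict Implicit.
Definition S0 : seq word := [:: [::];
 [::false]; [::true]; [::false;true]; [::true;false]; [::true;true];
 [::false;true;false]; [::false;true;true]; [::true;false;true]; [::true;true;false]; [::true;true;true];
 [::false;true;false;true]; [::false;true;true;true]; [::true;false;true;false]; [::true;false;true;true];
 [::true;true;false;true]; [::true;true;true;false]; [::false;true;false;true;true]; [::false;true;true;true;false];
 [::true;false;true;false;true]; [::true;false;true;true;true]; [::true;true;false;true;false]; [::true;true;true;false;true];
 [::false;true;true;true;false;true]; [::true;false;true;false;true;true]; [::true;false;true;true;true;false];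
 [::true;true;false;true;false;true]; [::true;false;true;true;true;false;true]; [::true;true;false;true;false;true;true] ].

Definition qred := Qred.
Definition qplus := Qplus.
Definition qmult := Qmult.
Definition qeqb := Qeq_bool.
Arguments qred : simpl never.
Arguments qplus : simpl never.
Arguments qmult : simpl never.
Arguments qeqb : simpl never.
Definition mon := seq nat.
Definition poly := seq (mon * Q).
Fixpoint ins (t : mon * Q) (l : poly) : poly :=
  match l with
  | [::] => [:: t]
  | t' :: l' => if t.1 == t'.1 then
      (let s := qred (qplus t.2 t'.2) in if qeqb s 0 then l' else (t.1, s) :: l')
      else t' :: ins t l'
  end.
Definition norm (l : poly) : poly := foldr ins [::] l.
Definition addP (p q : poly) : poly := norm (p ++ q).
Definition oppP (p : poly) : poly := [seq (t.1, Qopp t.2) | t <- p].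
Definition scaleP (c : Q) (p : poly) : poly := norm [seq (t.1, qred (qmult c t.2)) | t <- p].
Definition mulP (p q : poly) : poly :=
  norm [seq (sort leq (t.1 ++ t'.1), qred (qmult t.2 t'.2)) | t <- p, t' <- q].
Definition sumP (l : seq poly) : poly := foldr addP [::] l.

Definition vec := seq poly.
Definition nS := 29.
Definition vget (Z : vec) (w : word) : poly := nth [::] Z (index w S0).
Definition vmap (f : nat -> poly) : vec := map f (iota 0 nS).
Definition vzero : vec := vmap (fun _ => [::]).
Definition vadd (Z1 Z2 : vec) : vec := vmap (fun i => addP (nth [::] Z1 i) (nth [::] Z2 i)).
Definition vopp (Z : vec) : vec := vmap (fun i => oppP (nth [::] Z i)).
Definition vscale (c : Q) (Z : vec) : vec := vmap (fun i => scaleP c (nth [::] Z i)).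
Definition vmul (Z1 Z2 : vec) : vec := vmap (fun i =>
  let w := nth [::] S0 i in
  sumP (map (fun j => mulP (vget Z1 (take j w)) (vget Z2 (drop j w))) (iota 0 (size w).+1))).
Definition vsub (Z1 Z2 : vec) : vec := vadd Z1 (vopp Z2).
Fixpoint vpow (u : vec) (k : nat) : vec :=
  match k with 0 | 1 => u | k'.+1 => vmul (vpow u k') u end.
Definition expc (k : nat) : Q := match k with
  | 1 => Qmake 1 1 | 2 => Qmake 1 2 | 3 => Qmake 1 6 | 4 => Qmake 1 24
  | 5 => Qmake 1 120 | 6 => Qmake 1 720 | _ => Qmake 1 5040 end.
Definition logc (k : nat) : Q := match k with
  | 1 => Qmake 1 1 | 2 => Qmake (-1) 2 | 3 => Qmake 1 3 | 4 => Qmake (-1) 4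
  | 5 => Qmake 1 5 | 6 => Qmake (-1) 6 | _ => Qmake 1 7 end.
Definition vexpm1 (u : vec) : vec :=
  foldr (fun k acc => vadd (vscale (expc k) (vpow u k)) acc) vzero (iota 1 7).
Definition vlog1p (u : vec) : vec :=
  foldr (fun k acc => vadd (vscale (logc k) (vpow u k)) acc) vzero (iota 1 7).
Definition vbch (u v : vec) : vec :=
  let a := vexpm1 u in let b := vexpm1 v in vlog1p (vadd (vadd a b) (vmul a b)).
Definition vgcomm (u v : vec) : vec := vbch (vbch (vbch (vopp u) (vopp v)) u) v.
Definition vgrp (n : nat) (u v : vec) : vec := ssrnat.iter n (fun z => vgcomm z v) u.
Definition vlbr (p q : vec) : vec := vsub (vmul p q) (vmul q p).
Definition vlie (n : nat) (u v : vec) : vec := ssrnat.iter n (fun z => vlbr z v) u.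

Definition isnil (p : poly) := if p is [::] then true else false.
Definition checkGood (Z : vec) : bool :=
  all (fun i => isnil (nth [::] Z i)) (iota 1 22) &&
  isnil (addP (scaleP (Qmake 5 1) (nth [::] Z 23)) (scaleP (Qmake 2 1) (nth [::] Z 24))) &&
  isnil (addP (nth [::] Z 23) (nth [::] Z 25)) &&
  isnil (addP (nth [::] Z 24) (nth [::] Z 26)) &&
  isnil (addP (scaleP (Qmake 5 1) (nth [::] Z 27)) (scaleP (Qmake 2 1) (nth [::] Z 28))).


Fixpoint words (n : nat) : seq word :=
  if n is n'.+1 then [seq b :: x | b <- [:: false; true], x <- words n'] else [:: [::]].
Definition gencond (w : word) : bool :=
  [&& size w == 7, w != m1 & w != m2] || [&& 0 < size w < 7, ~~ infix w m1 & ~~ infix w m2].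
Definition wa : word := [:: lx; ly; ly; ly; lx; ly].
Definition wb : word := [:: ly; lx; ly; lx; ly; ly].
Definition wc : word := [:: ly; lx; ly; ly; ly; lx].
Definition wd : word := [:: ly; ly; lx; ly; lx; ly].
Definition monv (w : word) : vec :=
  vmap (fun i => if nth [::] S0 i == w then [:: ([::], Qmake 1 1)] else [::]).
Definition R5v : vec :=
  vadd (vadd (vscale (Qmake 2 1) (monv wa)) (vscale (Qmake (-5) 1) (monv wb)))
       (vadd (vscale (Qmake (-2) 1) (monv wc)) (vscale (Qmake 5 1) (monv wd))).
Definition R6v : vec := vadd (vscale (Qmake 2 1) (monv m1)) (vscale (Qmake (-5) 1) (monv m2)).
Definition Ptail : seq poly :=
  [:: [:: ([:: 0], Qmake 2 1)]; [:: ([:: 0], Qmake (-5) 1)]; [:: ([:: 0], Qmake (-2) 1)];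
      [:: ([:: 0], Qmake 5 1)]; [:: ([:: 1], Qmake 2 1)]; [:: ([:: 1], Qmake (-5) 1)]].
Definition Pv : vec := vmap (fun i => if i < 23 then [::] else nth [::] Ptail (i - 23)).
Definition Av : vec := vmap (fun i => if i == 0 then [::] else [:: ([:: i.+2], Qmake 1 1)]).
Definition X0 : poly := [:: ([:: 0], Qmake 1 1)].
Definition X1 : poly := [:: ([:: 1], Qmake 1 1)].
Definition qvec : vec := vmap (fun i =>
  addP (nth [::] Pv i) (oppP (addP (mulP X0 (nth [::] R5v i)) (mulP X1 (nth [::] R6v i))))).
Definition Zgrp : vec := vgrp 5 (monv [:: lx]) (monv [:: ly]).
Definition Cgrp : poly :=
  addP (scaleP (Qmake 5 1) (nth [::] Zgrp 27)) (scaleP (Qmake 2 1) (nth [::] Zgrp 28)).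
Definition Uv : vec := vmap (fun i => if i == 0 then [::] else [:: ([:: i], Qmake 1 1)]).
Definition Vv : vec := vmap (fun i => if i == 0 then [::] else [:: ([:: i + nS], Qmake 1 1)]).

Local Open Scope ring_scope.

Section Scal.
Variable F : fieldType.
Hypothesis charF : [pchar F] =i pred0.

Definition zF (z : Z) : F := (ssrZ.int_of_Z z)%:~R.
Lemma zF_add a b : zF (Z.add a b) = zF a + zF b.
Proof. by rewrite /zF -intrD -(rmorphD ssrZ.int_of_Z). Qed.
Lemma zF_mul a b : zF (Z.mul a b) = zF a * zF b.
Proof. by rewrite /zF -intrM -(rmorphM ssrZ.int_of_Z). Qed.
Lemma zF_opp a : zF (Z.opp a) = - zF a.
Proof. by rewrite /zF -intrN -(rmorphN ssrZ.int_of_Z). Qed.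
Lemma natF_neq0 (n : nat) : (0 < n)%N -> (n%:R : F) != 0.
Proof. by move=> h; rewrite ((pcharf0P F).1 charF n) -lt0n. Qed.
Lemma zF_pos p : zF (Zpos p) = (Pos.to_nat p)%:R.
Proof. by []. Qed.
Lemma zF_pos_neq0 p : zF (Zpos p) != 0.
Proof. rewrite zF_pos natF_neq0 //; apply/ltP; exact: Pos2Nat.is_pos. Qed.

Definition qF (q : Q) : F := zF (Qnum q) / zF (Zpos (Qden q)).
Lemma qF_eq a b : Qeq a b -> qF a = qF b.
Proof.
rewrite /Qeq /qF => /(congr1 zF); rewrite !zF_mul => h.
by apply/eqP; rewrite eqr_div ?zF_pos_neq0 // h.
Qed.
Lemma qF_plus a b : qF (Qplus a b) = qF a + qF b.
Proof.
case: a b => [an ad] [bn bd]; rewrite /qF /Qplus /=.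
have -> : Zpos (ad * bd) = Z.mul (Zpos ad) (Zpos bd) by [].
rewrite zF_add !zF_mul; have := zF_pos_neq0 ad; have := zF_pos_neq0 bd.
move=> h1 h2; field; by rewrite h1 h2.
Qed.
Lemma qF_mult a b : qF (Qmult a b) = qF a * qF b.
Proof.
case: a b => [an ad] [bn bd]; rewrite /qF /Qmult /=.
have -> : Zpos (ad * bd) = Z.mul (Zpos ad) (Zpos bd) by [].
rewrite !zF_mul; have := zF_pos_neq0 ad; have := zF_pos_neq0 bd.
move=> h1 h2; field; by rewrite h1 h2.
Qed.
Lemma qF_opp a : qF (Qopp a) = - qF a.
Proof. by case: a => an ad; rewrite /qF /= zF_opp mulNr. Qed.
Lemma qF_red a : qF (Qred a) = qF a.
Proof. apply: qF_eq; exact: Qred_correct. Qed.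
Lemma qF_eqb0 a : Qeq_bool a 0 = true -> qF a = 0.
Proof. by move/Qeq_bool_eq/qF_eq => ->; rewrite /qF /= mul0r. Qed.
Lemma qF_qred a : qF (qred a) = qF a. Proof. exact: qF_red. Qed.
Lemma qF_qplus a b : qF (qplus a b) = qF a + qF b. Proof. exact: qF_plus. Qed.
Lemma qF_qmult a b : qF (qmult a b) = qF a * qF b. Proof. exact: qF_mult. Qed.
Lemma qF_qeqb0 a : qeqb a 0 = true -> qF a = 0. Proof. exact: qF_eqb0. Qed.
Lemma qF_nat (n : positive) : qF (Qmake (Zpos n) 1) = (Pos.to_nat n)%:R.
Proof. by rewrite /qF /= divr1. Qed.
End Scal.

Section Eval.
Variable F : fieldType.
Hypothesis charF : [pchar F] =i pred0.
Variable rho : nat -> F.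

Definition evm (m : mon) : F := \prod_(i <- m) rho i.
Definition evp (p : poly) : F := \sum_(t <- p) qF F t.2 * evm t.1.

Lemma evp_nil : evp [::] = 0. Proof. by rewrite /evp big_nil. Qed.
Lemma evp_cons t l : evp (t :: l) = qF F t.2 * evm t.1 + evp l.
Proof. by rewrite /evp big_cons. Qed.

Lemma ev_ins t l : evp (ins t l) = qF F t.2 * evm t.1 + evp l.
Proof.
elim: l => [|t' l IH] /=; first by rewrite evp_cons.
case: eqP => [e|_].
  case: ifP => [/(qF_qeqb0 charF) h|_].
    rewrite evp_cons -e addrA -mulrDl -(qF_qplus charF) -(qF_qred charF) h mul0r add0r //.
  by rewrite !evp_cons qF_qred // qF_qplus // e mulrDl addrA.
by rewrite !evp_cons IH addrCA.
Qed.

Lemma ev_norm l : evp (norm l) = evp l.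
Proof. by elim: l => [|t l IH] //=; rewrite ev_ins IH evp_cons. Qed.

Lemma ev_add p q : evp (addP p q) = evp p + evp q.
Proof. by rewrite /addP ev_norm /evp big_cat. Qed.

Lemma ev_opp p : evp (oppP p) = - evp p.
Proof.
rewrite /evp big_map -sumrN; apply: eq_bigr => t _ /=.
by rewrite qF_opp mulNr.
Qed.

Lemma ev_scale c p : evp (scaleP c p) = qF F c * evp p.
Proof.
rewrite /scaleP ev_norm /evp big_map mulr_sumr; apply: eq_bigr => t _ /=.
by rewrite qF_qred // qF_qmult // mulrA.
Qed.

Lemma evm_sort m m' : evm (sort leq (m ++ m')) = evm m * evm m'.
Proof. by rewrite /evm (perm_big _ (permEl (perm_sort leq _))) big_cat. Qed.

Lemma ev_mul p q : evp (mulP p q) = evp p * evp q.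
Proof.
rewrite /mulP ev_norm /evp big_allpairs_dep mulr_suml; apply: eq_bigr => t _.
rewrite mulr_sumr; apply: eq_bigr => t' _ /=.
rewrite qF_qred // qF_qmult // evm_sort; ring.
Qed.

Lemma ev_sum l : evp (sumP l) = \sum_(p <- l) evp p.
Proof.
elim: l => [|p l IH] /=; first by rewrite evp_nil big_nil.
by rewrite ev_add IH big_cons.
Qed.

Definition Rel (Z : vec) (p : ncpoly F) :=
  forall i, (i < nS)%N -> evp (nth [::] Z i) = p (nth [::] S0 i).

Lemma nth_vmap f i : (i < nS)%N -> nth [::] (vmap f) i = f i.
Proof. by move=> h; rewrite /vmap (nth_map 0%N) ?size_iota // nth_iota. Qed.

Lemma Rel_get Z p w : Rel Z p -> w \in S0 -> evp (vget Z w) = p w.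
Proof.
move=> h wS; rewrite /vget h ?nth_index //.
by have := wS; rewrite -index_mem.
Qed.

Lemma Rel_zero : Rel vzero (pzero F).
Proof. by move=> i hi; rewrite nth_vmap // evp_nil. Qed.
Lemma Rel_add Z1 Z2 p q : Rel Z1 p -> Rel Z2 q -> Rel (vadd Z1 Z2) (padd p q).
Proof. by move=> h1 h2 i hi; rewrite nth_vmap // ev_add h1 // h2. Qed.
Lemma Rel_opp Z p : Rel Z p -> Rel (vopp Z) (popp p).
Proof. by move=> h i hi; rewrite nth_vmap // ev_opp h. Qed.
Lemma Rel_sub Z1 Z2 p q : Rel Z1 p -> Rel Z2 q -> Rel (vsub Z1 Z2) (psub p q).
Proof. by move=> h1 h2; apply: Rel_add h1 (Rel_opp h2). Qed.
Lemma Rel_scale c k Z p : qF F c = k -> Rel Z p -> Rel (vscale c Z) (pscale k p).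
Proof. by move=> hc h i hi; rewrite nth_vmap // ev_scale h // hc. Qed.

Lemma S0_closed i j : (i < nS)%N -> j \in iota 0 (size (nth [::] S0 i)).+1 ->
  (take j (nth [::] S0 i) \in S0) && (drop j (nth [::] S0 i) \in S0).
Proof.
have H : all (fun i => all (fun j => (take j (nth [::] S0 i) \in S0) && (drop j (nth [::] S0 i) \in S0))
   (iota 0 (size (nth [::] S0 i)).+1)) (iota 0 nS) by vm_compute.
move=> hi hj; have := allP H i; rewrite mem_iota add0n hi => /(_ isT) /allP; exact.
Qed.

Lemma Rel_mul Z1 Z2 p q : Rel Z1 p -> Rel Z2 q -> Rel (vmul Z1 Z2) (pmul p q).
Proof.
move=> h1 h2 i hi; rewrite nth_vmap // ev_sum big_map /pmul; rewrite -(big_mkord xpredT (fun j => p (take j (nth [::] S0 i)) * q (drop j (nth [::] S0 i)))) /index_iota subn0.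
apply: eq_big_seq => j hj; have /andP[a b] := S0_closed hi hj.
by rewrite ev_mul (Rel_get h1) // (Rel_get h2).
Qed.

Lemma Rel_pow Z p k : Rel Z p -> Rel (vpow Z k) (ppow p k).
Proof.
move=> h; elim: k => [|k IH] //; case: k IH => [|k] IH //.
exact: Rel_mul.
Qed.

Lemma Rel_foldr (r : seq nat) (fv : nat -> vec) (fp : nat -> ncpoly F) :
  (forall k, k \in r -> Rel (fv k) (fp k)) ->
  Rel (foldr (fun k a => vadd (fv k) a) vzero r) (\big[@padd F/pzero F]_(k <- r) fp k).
Proof.
elim: r => [|k r IH] h; first by rewrite big_nil; exact: Rel_zero.
rewrite big_cons /=; apply: Rel_add; first by apply: h; rewrite inE eqxx.
by apply: IH => k' hk'; apply: h; rewrite inE hk' orbT.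
Qed.

Lemma expc_ok k : k \in iota 1 7 -> qF F (expc k) = (k`!%:R)^-1.
Proof.
rewrite mem_iota; case: k => [//|[|[|[|[|[|[|[|k]]]]]]]] //= _;
  by rewrite /qF /= div1r.
Qed.

Lemma logc_ok k : k \in iota 1 7 -> qF F (logc k) = (-1) ^+ k.+1 / k%:R.
Proof.
rewrite mem_iota; case: k => [//|[|[|[|[|[|[|[|k]]]]]]]] //= _;
  rewrite /qF /zF /= ?exprS ?expr0 ?mulr1 ?mulN1r ?opprK ?mul1r; try done; by rewrite mulN1r.
Qed.

Lemma Rel_expm1 Z u : Rel Z u -> Rel (vexpm1 Z) (pexpm1 u).
Proof.
move=> h; apply: (@Rel_foldr (index_iota 1 8)) => k hk.
apply: Rel_scale (Rel_pow _ h); exact: expc_ok hk.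
Qed.
Lemma Rel_log1p Z u : Rel Z u -> Rel (vlog1p Z) (plog1p u).
Proof.
move=> h; apply: (@Rel_foldr (index_iota 1 8)) => k hk.
apply: Rel_scale (Rel_pow _ h); exact: logc_ok hk.
Qed.
Lemma Rel_bch Z1 Z2 u v : Rel Z1 u -> Rel Z2 v -> Rel (vbch Z1 Z2) (bch u v).
Proof.
move=> h1 h2; rewrite /vbch /bch.
have a := Rel_expm1 h1; have b := Rel_expm1 h2.
exact: Rel_log1p (Rel_add (Rel_add a b) (Rel_mul a b)).
Qed.
Lemma Rel_gcomm Z1 Z2 u v : Rel Z1 u -> Rel Z2 v -> Rel (vgcomm Z1 Z2) (gcomm u v).
Proof.
move=> h1 h2; rewrite /vgcomm /gcomm.
apply: (Rel_bch _ h2); apply: (Rel_bch _ h1); apply: Rel_bch; exact: Rel_opp.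
Qed.
Lemma Rel_grp n Z1 Z2 u v : Rel Z1 u -> Rel Z2 v -> Rel (vgrp n Z1 Z2) (grp_engel n u v).
Proof.
move=> h1 h2; elim: n => [|n IH] //=; exact: Rel_gcomm.
Qed.
Lemma Rel_lbr Z1 Z2 u v : Rel Z1 u -> Rel Z2 v -> Rel (vlbr Z1 Z2) (lbr u v).
Proof. by move=> h1 h2; apply: Rel_sub; apply: Rel_mul. Qed.
Lemma Rel_lie n Z1 Z2 u v : Rel Z1 u -> Rel Z2 v -> Rel (vlie n Z1 Z2) (lie_engel n u v).
Proof.
move=> h1 h2; elim: n => [|n IH] //=; exact: Rel_lbr.
Qed.
End Eval.

Section Alg.
Variable F : fieldType.
Hypothesis charF : [pchar F] =i pred0.
Implicit Types p q a : ncpoly F.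

Lemma inA_zero : in_A (pzero F).
Proof. by split => //; exists [::]. Qed.
Lemma inA_add p q : in_A p -> in_A q -> in_A (padd p q).
Proof.
move=> [p0 [s1 h1]] [q0 [s2 h2]]; split; first by rewrite /padd p0 q0 addr0.
exists (s1 ++ s2) => w; rewrite mem_cat negb_or => /andP[a b].
by rewrite /padd h1 // h2 // addr0.
Qed.
Lemma inA_opp p : in_A p -> in_A (popp p).
Proof.
move=> [p0 [s1 h1]]; split; first by rewrite /popp p0 oppr0.
by exists s1 => w hw; rewrite /popp h1 // oppr0.
Qed.
Lemma inA_scale c p : in_A p -> in_A (pscale c p).
Proof.
move=> [p0 [s1 h1]]; split; first by rewrite /pscale p0 mulr0.
by exists s1 => w hw; rewrite /pscale h1 // mulr0.
Qed.
Lemma inA_sub p q : in_A p -> in_A q -> in_A (psub p q).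
Proof. by move=> hp hq; apply: inA_add hp (inA_opp hq). Qed.
Lemma inA_mul p q : in_A p -> in_A q -> in_A (pmul p q).
Proof.
move=> [p0 [s1 h1]] [q0 [s2 h2]]; split.
  by rewrite /pmul big_ord1 /= p0 mul0r.
exists [seq x ++ y | x <- s1, y <- s2] => w hw; rewrite /pmul big1 // => i _.
case: (boolP (take i w \in s1)) => [a|a]; last by rewrite h1 // mul0r.
case: (boolP (drop i w \in s2)) => [b|b]; last by rewrite h2 // mulr0.
by case/negP: hw; rewrite -[w](cat_take_drop i) (allpairs_f cat a b).
Qed.
Lemma inA_lbr p q : in_A p -> in_A q -> in_A (lbr p q).
Proof. by move=> hp hq; apply: inA_sub; apply: inA_mul. Qed.
Lemma inA_lie n p q : in_A p -> in_A q -> in_A (lie_engel n p q).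
Proof. by move=> hp hq; elim: n => [|n IH] //=; apply: inA_lbr. Qed.
Lemma inA_mono (w : word) : w != [::] -> in_A (mono F w).
Proof.
move=> hw; split; first by rewrite /mono eq_sym (negbTE hw).
by exists [:: w] => u; rewrite inE /mono => /negbTE ->.
Qed.

Lemma inI_gen p : gensI p -> inI p.
Proof. by move=> h J _ hJ; apply: hJ. Qed.
Lemma inI_add p q : inI p -> inI q -> inI (padd p q).
Proof. by move=> h1 h2 J hJ hS; case: (hJ) => _ a _ _ _; apply: a; [apply: h1|apply: h2]. Qed.
Lemma inI_zero : inI (pzero F).
Proof. by move=> J [] . Qed.
Lemma inI_scale c p : inI p -> inI (pscale c p).
Proof. by move=> h J hJ hS; case: (hJ) => _ _ a _ _; apply: a; apply: h. Qed.
Lemma inI_mulr a p : in_A a -> inI p -> inI (pmul p a).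
Proof. by move=> ha h J hJ hS; case: (hJ) => _ _ _ _ b; apply: b => //; apply: h. Qed.

Lemma mono_cat (a b : word) : mono F (a ++ b) = pmul (mono F a) (mono F b).
Proof.
apply: functional_extensionality => w; rewrite /pmul /mono.
have H : forall i : 'I_(size w).+1, ((if take i w == a then 1 else 0) * (if drop i w == b then 1 else 0) : F)
   = if (i == size a :> nat) && (w == a ++ b) then 1 else 0.
  move=> i; move: (nat_of_ord i) (ltn_ord i) => j hj.
  case: (boolP ((j == size a) && (w == a ++ b))) => [/andP[/eqP e1 /eqP e2]|hn].
    by rewrite e2 e1 take_size_cat // drop_size_cat // !eqxx mulr1.
  case: eqP => [ta|]; last by rewrite mul0r.
  case: eqP => [db|]; last by rewrite mulr0.
  case/negP: hn; rewrite -ta -db cat_take_drop eqxx andbT size_take.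
  by case: ltnP => // h; rewrite eqn_leq h -ltnS hj.
rewrite (eq_bigr _ (fun i _ => H i)).
case: (eqVneq w (a ++ b)) => [e|hw]; last first.
  by rewrite big1 // => i _; rewrite andbF.
have hs : (size a < (size w).+1)%N by rewrite e ltnS size_cat leq_addr.
rewrite (bigD1 (Ordinal hs)) //= eqxx /= big1 ?addr0 // => i hi.
by rewrite andbT; case: eqP => // e'; case/eqP: hi; apply: val_inj.
Qed.
End Alg.

Section Main.
Variable F : fieldType.
Hypothesis charF : [pchar F] =i pred0.
Implicit Types p q a : ncpoly F.

Definition pS p k := p (nth [::] S0 k).
Definition GoodV p := [/\ forall i, (0 < i < 23)%N -> pS p i = 0,
  5 * pS p 23 + 2 * pS p 24 = 0, pS p 23 + pS p 25 = 0,
  pS p 24 + pS p 26 = 0 & 5 * pS p 27 + 2 * pS p 28 = 0].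
Definition Good p := in_A p /\ GoodV p.

Lemma isnilP (x : poly) : isnil x -> x = [::]. Proof. by case: x. Qed.
Lemma qFpos (n : positive) : qF F (Qmake (Zpos n) 1) = (Pos.to_nat n)%:R.
Proof. by rewrite /qF divr1. Qed.
Lemma qFneg (n : positive) : qF F (Qmake (Zneg n) 1) = - (Pos.to_nat n)%:R.
Proof. rewrite /qF divr1 /zF /=. by rewrite NegzE prednK ?intrN //; apply/ltP; exact: Pos2Nat.is_pos. Qed.

Lemma qF2 : qF F (Qmake 2 1) = 2. Proof. by rewrite qFpos. Qed.
Lemma qF5 : qF F (Qmake 5 1) = 5. Proof. by rewrite qFpos. Qed.
Lemma qFm2 : qF F (Qmake (-2) 1) = -2. Proof. by rewrite qFneg. Qed.
Lemma qFm5 : qF F (Qmake (-5) 1) = -5. Proof. by rewrite qFneg. Qed.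
Lemma qF1 : qF F (Qmake 1 1) = 1. Proof. by rewrite qFpos. Qed.

Lemma Good_of_Rel rho Z p : Rel rho Z p -> checkGood Z -> GoodV p.
Proof.
move=> h; rewrite /checkGood => /andP[/andP[/andP[/andP[ha hb] hc] hd] he].
have E i : (i < nS)%N -> pS p i = evp rho (nth [::] Z i) by move=> hi; rewrite h.
split.
- move=> i /andP[i0 i23]; rewrite E ?(ltn_trans i23) //.
  have : i \in iota 1 22 by rewrite mem_iota i0.
  by move/(allP ha)/isnilP => ->; rewrite evp_nil.
- rewrite !E //; move/isnilP: hb => /(congr1 (evp rho)).
  by rewrite (ev_add charF) !(ev_scale charF) ?qF2 ?qF5 evp_nil.
- rewrite !E //; move/isnilP: hc => /(congr1 (evp rho)).
  by rewrite (ev_add charF) evp_nil.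
- rewrite !E //; move/isnilP: hd => /(congr1 (evp rho)).
  by rewrite (ev_add charF) evp_nil.
- rewrite !E //; move/isnilP: he => /(congr1 (evp rho)).
  by rewrite (ev_add charF) !(ev_scale charF) ?qF2 ?qF5 evp_nil.
Qed.

Lemma two_neq0 : (2 : F) != 0. Proof. exact: (natF_neq0 charF). Qed.

Lemma L1 (x y : F) : 5 * x + 2 * y = 0 -> -5 * (x / 2) = y.
Proof.
have h2 := two_neq0.
move=> e; transitivity ((0 - 5 * x) / 2); first by field.
by rewrite -e; field.
Qed.
Lemma L2 (x y : F) : x + y = 0 -> y = - x.
Proof. by move=> e; apply/eqP; rewrite -subr_eq0 opprK addrC e. Qed.

Lemma Rel_Pv rho p : Good p -> rho 0%N = pS p 23 / 2 -> rho 1%N = pS p 27 / 2 -> Rel rho Pv p.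
Proof.
move=> [[p0 _] [h0 e1 e2 e3 e4]] r0 r1 i hi; rewrite nth_vmap //.
have h2 := two_neq0.
case: ltnP => [hl|hg].
  rewrite evp_nil; case: i hi hl => [|i] hi hl; first by rewrite p0.
  by rewrite -/(pS p i.+1) h0.
have [k ki] : exists k, i = (23 + k)%N by exists (i - 23)%N; rewrite subnKC.
subst i.
rewrite addKn -/(pS p (23 + k)%N).
have hk : (k < 6)%N by rewrite -(ltn_add2l 23).
clear hi hg; case: k hk => [|[|[|[|[|[|k]]]]]] // _;
  rewrite /= ?addnS ?addn0 evp_cons evp_nil addr0 /evm big_seq1 ?r0 ?r1 ?qF2 ?qF5 ?qFm2 ?qFm5.
- by field.
- exact: L1.
- by rewrite (L2 e2); field.
- by rewrite (L2 e3) -(L1 e1); field.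
- by field.
- exact: L1.
Qed.

Lemma evp1 (rho : nat -> F) k : evp rho [:: ([:: k], Qmake 1 1)] = rho k.
Proof. by rewrite evp_cons evp_nil addr0 /evm big_seq1 qF1 mul1r. Qed.

Lemma Rel_mono (rho : nat -> F) w : Rel rho (monv w) (mono F w).
Proof.
move=> i hi; rewrite nth_vmap // /mono; case: eqP => _; last exact: evp_nil.
by rewrite evp_cons evp_nil addr0 /evm big_nil qF1 mulr1.
Qed.
Lemma Rel_R5 (rho : nat -> F) : Rel rho R5v (rel5 F).
Proof.
rewrite /R5v /rel5; apply: (Rel_add charF); apply: (Rel_add charF).
- exact: (Rel_scale charF qF2 (Rel_mono _ _)).
- exact: (Rel_scale charF qFm5 (Rel_mono _ _)).
- exact: (Rel_scale charF qFm2 (Rel_mono _ _)).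
- exact: (Rel_scale charF qF5 (Rel_mono _ _)).
Qed.
Lemma Rel_R6 (rho : nat -> F) : Rel rho R6v (rel6 F).
Proof.
rewrite /R6v /rel6; apply: (Rel_add charF).
- exact: (Rel_scale charF qF2 (Rel_mono _ _)).
- exact: (Rel_scale charF qFm5 (Rel_mono _ _)).
Qed.
Lemma inA_rel5 : in_A (rel5 F).
Proof. by rewrite /rel5; repeat apply: inA_add; apply: inA_scale; apply: inA_mono. Qed.
Lemma inA_rel6 : in_A (rel6 F).
Proof. by rewrite /rel6; repeat apply: inA_add; apply: inA_scale; apply: inA_mono. Qed.

Lemma mem_words (w : word) : w \in words (size w).
Proof.
elim: w => [|b w IH] //.
change (b :: w \in [seq c :: x | c <- [:: false; true], x <- words (size w)]).
apply/allpairsP; exists (b, w) => /=; split => //.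
by case: b.
Qed.

Lemma mono_notS_inI w : w \notin S0 -> inI (mono F w).
Proof.
move=> hw.
have w0 : w != [::] by apply: contraNneq hw => ->.
case: (leqP (size w) 7) => hs.
  have : (w \in S0) || gencond w.
    have H : all (fun n => all (fun w => (w \in S0) || gencond w) (words n)) (iota 1 7)
      by vm_compute.
    have : size w \in iota 1 7 by rewrite mem_iota lt0n size_eq0 w0.
    move/(allP H)/allP; apply; exact: mem_words.
  rewrite (negbTE hw) /= => /orP[/and3P[/eqP a b c] | /and3P[a b c]];
    apply: inI_gen; left; exists w; split => //; [apply: Or43 | apply: Or44]; by split.
case: (eqVneq (size w) 8) => h8.
  by apply: inI_gen; left; exists w; split => //; apply: Or41.
have h : (8 < size w)%N by rewrite ltn_neqAle eq_sym h8.
rewrite -(cat_take_drop 8 w) mono_cat; apply: inI_mulr.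
  by apply: inA_mono; rewrite -size_eq0 size_drop subn_eq0 -ltnNge h.
by apply: inI_gen; left; exists (take 8 w); split => //; apply: Or41; rewrite size_take h.
Qed.

Lemma supp_inI (s : seq word) q : (forall w, w \notin s -> q w = 0) ->
  (forall w, w \in S0 -> q w = 0) -> inI q.
Proof.
elim: s q => [|w0 s IH] q hs hS.
  have -> : q = pzero F by apply: functional_extensionality => w; apply: hs.
  exact: inI_zero.
pose q' := padd q (pscale (- q w0) (mono F w0)).
have -> : q = padd q' (pscale (q w0) (mono F w0)).
  by apply: functional_extensionality => x; rewrite /q' /padd /pscale; ring.
apply: inI_add.
  apply: IH.
    move=> x hx; rewrite /q' /padd /pscale /mono; case: eqP => [->|ne].
      by rewrite mulr1 addrN.
    by rewrite mulr0 addr0 hs // inE negb_or hx andbT; apply/eqP.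
  move=> x hx; rewrite /q' /padd /pscale /mono hS //; case: eqP => [e|_].
    by rewrite -e hS // oppr0 mul0r addr0.
  by rewrite mulr0 addr0.
case: (boolP (w0 \in S0)) => h.
  have -> : pscale (q w0) (mono F w0) = pzero F.
    by apply: functional_extensionality => x; rewrite /pscale hS // mul0r.
  exact: inI_zero.
exact: inI_scale (mono_notS_inI h).
Qed.

Lemma Good_inI p : Good p -> inI p.
Proof.
move=> G; have [hA [h0 e1 e2 e3 e4]] := G.
set t := pS p 23 / 2; set s := pS p 27 / 2.
pose X := padd (pscale t (rel5 F)) (pscale s (rel6 F)).
pose q := psub p X.
pose rho (i : nat) := if i == 0%N then t else s.
have RP : Rel rho Pv p by apply: Rel_Pv.
have Hc : forall i, (i < nS)%N -> isnil (nth [::] qvec i).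
  move=> i hi; have H : all (fun i => isnil (nth [::] qvec i)) (iota 0 nS) by vm_compute.
  by move/allP: H => /(_ i); rewrite mem_iota => /(_ hi).
have hq : forall w, w \in S0 -> q w = 0.
  move=> w hw; have hi : (index w S0 < nS)%N by have := hw; rewrite -index_mem.
  move: (isnilP (Hc _ hi)) => /(congr1 (evp rho)).
  rewrite nth_vmap // (ev_add charF) ev_opp // (ev_add charF) !(ev_mul charF) evp_nil.
  rewrite (RP _ hi) (Rel_R5 rho hi) (Rel_R6 rho hi) nth_index // !evp1.
  by rewrite /q /psub /X /padd /popp /pscale.
have qA : in_A q.
  apply: inA_sub hA (inA_add (inA_scale _ inA_rel5) (inA_scale _ inA_rel6)).
have [_ [sq hsq]] := qA.
have qI : inI q := supp_inI hsq hq.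
have -> : p = padd q X.
  by apply: functional_extensionality => x; rewrite /q /psub /padd /popp; ring.
apply: inI_add qI (inI_add _ _); apply: inI_scale; apply: inI_gen; right; [left|right] => //.
Qed.

Lemma part1 (u v : ncpoly F) : in_A u -> in_A v -> inI (lie_engel 5 u v).
Proof.
move=> hu hv.
pose rho i := if (i < nS)%N then u (nth [::] S0 i) else v (nth [::] S0 (i - nS)).
have RU : Rel rho Uv u.
  move=> i hi; rewrite nth_vmap //; case: eqP => [->|i0]; first by rewrite evp_nil hu.1.
  by rewrite evp1 /rho hi.
have RV : Rel rho Vv v.
  move=> i hi; rewrite nth_vmap //; case: eqP => [->|i0]; first by rewrite evp_nil hv.1.
  by rewrite evp1 /rho ltnNge leq_addl /= addnK.
apply: Good_inI; split; first exact: inA_lie.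
apply: (Good_of_Rel (Rel_lie charF 5 RU RV)); by vm_compute.
Qed.

Lemma pS_add p q i : pS (padd p q) i = pS p i + pS q i. Proof. by []. Qed.
Lemma pS_scale c p i : pS (pscale c p) i = c * pS p i. Proof. by []. Qed.

Lemma Good_ideal : is_ideal Good.
Proof.
split.
- split; first exact: inA_zero.
  by split; rewrite /pS /pzero ?mulr0 ?addr0.
- move=> p q [hp [a1 b1 c1 d1 e1]] [hq [a2 b2 c2 d2 e2]]; split; first exact: inA_add.
  split; rewrite ?pS_add.
  + by move=> i hi; rewrite pS_add a1 // a2 // addr0.
  + by rewrite !mulrDr addrACA b1 b2 addr0.
  + by rewrite addrACA c1 c2 addr0.
  + by rewrite addrACA d1 d2 addr0.
  + by rewrite !mulrDr addrACA e1 e2 addr0.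
- move=> c p [hp [a1 b1 c1 d1 e1]]; split; first exact: inA_scale.
  split; rewrite ?pS_scale.
  + by move=> i hi; rewrite pS_scale a1 // mulr0.
  + by rewrite mulrCA [2 * _]mulrCA -mulrDr b1 mulr0.
  + by rewrite -mulrDr c1 mulr0.
  + by rewrite -mulrDr d1 mulr0.
  + by rewrite mulrCA [2 * _]mulrCA -mulrDr e1 mulr0.
- move=> a p ha G; split; first exact: inA_mul ha G.1.
  pose rho (i : nat) := if i is i'.+2 then a (nth [::] S0 i') else if i == 0%N then pS p 23 / 2 else pS p 27 / 2.
  have RA : Rel rho Av a.
    move=> i hi; rewrite nth_vmap //; case: eqP => [->|i0]; first by rewrite evp_nil ha.1.
    by rewrite evp1.
  have RP : Rel rho Pv p by apply: Rel_Pv.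
  apply: (Good_of_Rel (Rel_mul charF RA RP)); by vm_compute.
- move=> a p ha G; split; first exact: inA_mul G.1 ha.
  pose rho (i : nat) := if i is i'.+2 then a (nth [::] S0 i') else if i == 0%N then pS p 23 / 2 else pS p 27 / 2.
  have RA : Rel rho Av a.
    move=> i hi; rewrite nth_vmap //; case: eqP => [->|i0]; first by rewrite evp_nil ha.1.
    by rewrite evp1.
  have RP : Rel rho Pv p by apply: Rel_Pv.
  apply: (Good_of_Rel (Rel_mul charF RP RA)); by vm_compute.
Qed.

Lemma gens_Good s : gensI s -> Good s.
Proof.
case=> [[w [-> H]] | [->|->]].
- have hA : all (fun s => [&& (size s <= 7)%N, (count (pred1 lx) s <= 2)%N,
      (size s == 7%N) ==> (s == m1) || (s == m2) & infix s m1 || infix s m2]) S0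
    by vm_compute.
  have hw : w \notin S0.
    apply/negP => /(allP hA) /and4P [a b c d]; case: H => [h|h|[h1 h2 h3]|[h1 h2 h3]].
    + by rewrite h in a.
    + by rewrite leqNgt h in b.
    + rewrite h1 eqxx /= in c.
      by case/orP: c => /eqP e; [rewrite e eqxx in h2 | rewrite e eqxx in h3].
    + by case/orP: d => d; [rewrite d in h2 | rewrite d in h3].
  have w0 : w != [::] by apply: contraNneq hw => ->.
  split; first exact: inA_mono.
  apply: (@Good_of_Rel (fun _ => 0) vzero); last by vm_compute.
  move=> i hi; rewrite nth_vmap // evp_nil /mono; case: eqP => // e.
  by case/negP: hw; rewrite -e mem_nth.
- split; first exact: inA_rel5.
  apply: (Good_of_Rel (Rel_R5 (fun _ => 0))); by vm_compute.
- split; first exact: inA_rel6.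
  apply: (Good_of_Rel (Rel_R6 (fun _ => 0))); by vm_compute.
Qed.

Lemma ev_comb (rho : nat -> F) z1 z2 :
  evp rho (addP (scaleP (Qmake 5 1) z1) (scaleP (Qmake 2 1) z2)) = 5 * evp rho z1 + 2 * evp rho z2.
Proof. by rewrite (ev_add charF) !(ev_scale charF) qF5 qF2. Qed.

Lemma comb_Rel (rho : nat -> F) Z g : Rel rho Z g ->
  evp rho (addP (scaleP (Qmake 5 1) (nth [::] Z 27)) (scaleP (Qmake 2 1) (nth [::] Z 28)))
  = 5 * pS g 27 + 2 * pS g 28.
Proof. by move=> R; rewrite ev_comb (R 27%N) // (R 28%N). Qed.

Lemma part2 : exists u v : ncpoly F, [/\ in_A u, in_A v & ~ inI (grp_engel 5 u v)].
Proof.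
exists (mono F [:: lx]), (mono F [:: ly]); split; try exact: inA_mono.
move=> H; have [_ [_ _ _ _ e]] := H Good Good_ideal gens_Good.
pose rho := fun _ : nat => (0 : F).
have R : Rel rho Zgrp (grp_engel 5 (mono F [:: lx]) (mono F [:: ly])).
  exact: (Rel_grp charF) (Rel_mono _ _) (Rel_mono _ _).
set g := grp_engel 5 (mono F [:: lx]) (mono F [:: ly]).
have E1 : evp rho Cgrp = 5 * pS g 27 + 2 * pS g 28 by exact: comb_Rel R.
have C : Cgrp = [:: ([::], Qmake 12 1)] by vm_compute.
have E2 : evp rho Cgrp = 12%:R.
  by rewrite C evp_cons evp_nil /evm big_nil mulr1 addr0 qFpos.
move: E2; rewrite E1 e => /eqP.
by rewrite eq_sym (negbTE (natF_neq0 charF _)).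
Qed.
End Main.

Theorem corollary1p4 (F : fieldType) (charF0 : [pchar F] =i pred0) :
  (* L = [B] is 5-Engel *)
  (forall u v : ncpoly F, in_A u -> in_A v -> inI (lie_engel 5 u v))
  /\
  (* the group L^* is not 5-Engel *)
  (exists u v : ncpoly F, [/\ in_A u, in_A v & ~ inI (grp_engel 5 u v)]).
Proof.
split; [exact: part1 | exact: part2].
Qed.
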